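(* Let $S_u\subseteq[p]$, $S_v\subseteq[q]$ with $|S_u|=s_u$, $|S_v|=s_v$, let $B^\star\in\mathbb R^{p\times q}$ have all nonzero entries in $S_u\times S_v$, assume $n>s_us_v$, $\lambda>0$, and $\sigma_{\min}((\widehat\Sigma_X)_{S_uS_u})>0$, $\sigma_{\min}((\widehat\Sigma_Y)_{S_vS_v})>0$. Let $\tilde B\in\mathbb R^{s_u\times s_v}$ be a minimizer of $$\tfrac12\Big\|\tfrac1nX_{S_u}BY_{S_v}^\top-I_n\Big\|_F^2+\lambda\sum_{i,j}|B_{ij}|$$ and $\tilde\Delta=\tilde B-B^\star_{S_uS_v}$. Then $$\|\tilde\Delta\|_F\le\frac{2\big(\|\widehat\Sigma_{XY}-\widehat\Sigma_XB^\star\widehat\Sigma_Y\|_\infty+\lambda\big)}{\sigma_{\min}((\widehat\Sigma_X)_{S_uS_u})\,\sigma_{\min}((\widehat\Sigma_Y)_{S_vS_v})}\sqrt{s_us_v}.$$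
   Context: $X\in\mathbb R^{n\times p}$, $Y\in\mathbb R^{n\times q}$ are data matrices; $X_{S_u}$ (resp. $Y_{S_v}$) is the submatrix of columns indexed by $S_u$ (resp. $S_v$). $\widehat\Sigma_X=X^\top X/n$, $\widehat\Sigma_Y=Y^\top Y/n$, $\widehat\Sigma_{XY}=X^\top Y/n$. $A_{S_1S_2}$ is the submatrix with rows in $S_1$ and columns in $S_2$; $\|A\|_\infty=\max_{ij}|A_{ij}|$; $\sigma_{\min}$ is the smallest singular value. *)

(* Defs.v *)
From HB Require Import structures.
From mathcomp Require Import all_boot all_order all_algebra.
Set Implicit Arguments. Unset Strict Implicit. Unset Printing Implicit Defensive.
Import Order.TTheory GRing.Theory Num.Theory.
Local Open Scope ring_scope.

(* Columns of A indexed by S (in increasing order of indices, via enum_val). *)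
Definition subcols (R : Type) (m p : nat) (S : {set 'I_p}) (A : 'M[R]_(m, p))
  : 'M[R]_(m, #|S|) := \matrix_(i < m, k < #|S|) A i (enum_val k).

Definition submat (R : Type) (p q : nat) (S1 : {set 'I_p}) (S2 : {set 'I_q})
  (A : 'M[R]_(p, q)) : 'M[R]_(#|S1|, #|S2|) :=
  \matrix_(k < #|S1|, l < #|S2|) A (enum_val k) (enum_val l).

Definition frob2 (R : rcfType) (m n : nat) (A : 'M[R]_(m, n)) : R :=
  \sum_(i < m) \sum_(j < n) A i j ^+ 2.
Definition frob (R : rcfType) (m n : nat) (A : 'M[R]_(m, n)) : R :=
  Num.sqrt (frob2 A).

Definition l1norm (R : rcfType) (m n : nat) (A : 'M[R]_(m, n)) : R :=
  \sum_(i < m) \sum_(j < n) `|A i j|.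

Definition maxnorm (R : rcfType) (m n : nat) (A : 'M[R]_(m, n)) : R :=
  \big[Num.max/0]_(i < m) \big[Num.max/0]_(j < n) `|A i j|.

(* s is the smallest singular value of the square matrix A: the singular values
   of A are the square roots of the eigenvalues of A^T A, and s is the
   smallest of them. *)
Definition is_sigma_min (R : rcfType) (k : nat) (A : 'M[R]_k) (s : R) : Prop :=
  [/\ 0 <= s, eigenvalue (A^T *m A) (s ^+ 2)
    & forall a, eigenvalue (A^T *m A) a -> s ^+ 2 <= a].

Arguments subcols {R m p} S A.
Arguments submat {R p q} S1 S2 A.
Arguments frob2 {R m n} A.
Arguments frob {R m n} A.
Arguments l1norm {R m n} A.
Arguments maxnorm {R m n} A.
Arguments is_sigma_min {R k} A s.

(* Main.v *)
Require Import Defs.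
From HB Require Import structures.
From mathcomp Require Import all_boot all_order all_algebra.
From mathcomp Require Import spectral sesquilinear complex.
From mathcomp Require Import ring lra.
Import Order.TTheory GRing.Theory Num.Theory.
Set Implicit Arguments. Unset Strict Implicit.
Local Open Scope ring_scope.

Section Aux.
Variable R : rcfType.

Definition sel p (S : {set 'I_p}) : 'M[R]_(#|S|, p) :=
  \matrix_(k, i) (enum_val k == i)%:R.

Lemma sum_sel p (S : {set 'I_p}) (k : 'I_#|S|) (F : 'I_p -> R) :
  \sum_(i < p) (enum_val k == i)%:R * F i = F (enum_val k).
Proof.
rewrite (bigD1 (enum_val k)) //= eqxx mul1r big1 ?addr0 //.
by move=> j /negbTE jk; rewrite eq_sym jk mul0r.
Qed.

Lemma subcolsE m p (S : {set 'I_p}) (X : 'M[R]_(m, p)) :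
  subcols S X = X *m (sel S)^T.
Proof.
apply/matrixP => r k; rewrite !mxE.
rewrite -(sum_sel k (fun i => X r i)); apply: eq_bigr => i _.
by rewrite !mxE mulrC.
Qed.

Lemma submatE p q (S1 : {set 'I_p}) (S2 : {set 'I_q}) (Z : 'M[R]_(p, q)) :
  submat S1 S2 Z = sel S1 *m Z *m (sel S2)^T.
Proof.
apply/matrixP => k l; rewrite !mxE.
under eq_bigr do rewrite !mxE mulrC.
rewrite sum_sel.
under eq_bigr do rewrite !mxE.
by rewrite sum_sel.
Qed.

Definition dS p (S : {set 'I_p}) : 'M[R]_p :=
  \matrix_(i, j) ((i == j) && (i \in S))%:R.

Lemma selTsel p (S : {set 'I_p}) : (sel S)^T *m sel S = dS S.
Proof.
apply/matrixP => i j; rewrite !mxE.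
under eq_bigr do rewrite !mxE.
case: (boolP (i \in S)) => Hi.
  rewrite (bigD1 (enum_rank_in Hi i)) //= enum_rankK_in // eqxx mul1r.
  rewrite big1 ?addr0 ?andbT //.
  move=> k /negbTE kne; case: eqP => [E|_]; last by rewrite mul0r.
  by have := enum_valK_in Hi k; rewrite E => kk; rewrite kk eqxx in kne.
rewrite andbF big1 // => k _.
case: eqP => [E|_]; last by rewrite mul0r.
by move: Hi; rewrite -E enum_valP.
Qed.

Lemma support_eq p q (S1 : {set 'I_p}) (S2 : {set 'I_q}) (B : 'M[R]_(p, q)) :
  (forall i j, B i j != 0 -> (i \in S1) && (j \in S2)) ->
  (sel S1)^T *m submat S1 S2 B *m sel S2 = B.
Proof.
move=> Hs; rewrite submatE !mulmxA selTsel -mulmxA selTsel.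
apply/matrixP => i j; rewrite !mxE.
rewrite (bigD1 j) //= big1 ?addr0; last first.
  by move=> l /negbTE lj; rewrite !mxE lj mulr0.
rewrite [dS _ j j]mxE eqxx /= [(_ *m _) i j]mxE (bigD1 i) //= big1 ?addr0; last first.
  by move=> l /negbTE li; rewrite !mxE eq_sym li mul0r.
rewrite mxE eqxx /=.
case: (eqVneq (B i j) 0) => [->|nz]; first by rewrite !(mulr0, mul0r).
by case/andP: (Hs _ _ nz) => -> ->; rewrite mul1r mulr1.
Qed.

End Aux.
Arguments sel {R p} S.
Arguments dS {R p} S.

Section Quad.
Local Open Scope sesquilinear_scope.
Variable R : rcfType.
Local Notation C := (R[i]).
Local Notation toC := (real_complex R).

Lemma conjC_toC (x : R) : (toC x)^* = toC x.
Proof.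
apply/eqP; rewrite -CrealE; apply/complex_realP; by exists x.
Qed.

Lemma eig_toC k (S : 'M[R]_k) (r : R) :
  eigenvalue (map_mx toC S) (toC r) -> eigenvalue S r.
Proof.
by rewrite !eigenvalue_root_char -map_char_poly fmorph_root.
Qed.

Lemma diag_lb k (d : 'rV[C]_k) (c : R) (y : 'rV[C]_k) :
  (forall i, toC c <= d 0 i) ->
  toC c * (y *m y^t*) 0 0 <= (y *m diag_mx d *m y^t*) 0 0.
Proof.
move=> dge; rewrite mul_mx_diag !mxE mulr_sumr; apply: ler_sum => i _.
rewrite !mxE mulrA [_ * d 0 i]mulrC -!mulrA.
by apply: ler_wpM2r; [exact: mul_conjC_ge0 | exact: dge].
Qed.

Lemma quad_lb k (S : 'M[R]_k) (c : R) :
  S^T = S -> (forall a, eigenvalue S a -> c <= a) ->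
  forall x : 'rV[R]_k, c * (x *m x^T) 0 0 <= (x *m S *m x^T) 0 0.
Proof.
move=> Ssym Sev x.
pose S' := map_mx toC S.
have Sreal : S' \is a mxOver Num.real.
  by apply/mxOverP => i j; rewrite mxE; apply/complex_realP; eexists.
have Ssym' : S' \is symmetricmx.
  by apply/is_hermitianmxP; rewrite expr0 scale1r /S' map_trmx Ssym map_mx_id.
have Snorm := symmetric_normalmx Ssym' Sreal.
have Sherm := realsym_hermsym Ssym' Sreal.
have /orthomx_spectralP HS := Snorm.
set P := spectralmx S' in HS; set d := spectral_diag S' in HS.
have Pu : P \is unitarymx := spectral_unitarymx S'.
have Punit : P \in unitmx := spectral_unit S'.
have PP : P *m P^t* = 1%:M by apply/unitarymxP.
have PiP : invmx P = P^t* := invmx_unitary Pu.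
have PtP : P^t* *m P = 1%:M by rewrite -PiP mulVmx.
have dreal := hermitian_spectral_diag_real Sherm; rewrite -/d in dreal.
have dge : forall i, toC c <= d 0 i.
  move=> i; have /complex_realP [r dr] : d 0 i \is Num.real by apply: (mxOverP dreal).
  rewrite dr lecR; apply: Sev; apply: eig_toC; rewrite -/S' -dr.
  apply/eigenvalueP; exists (row i P).
    rewrite -row_mul.
    have -> : P *m S' = diag_mx d *m P by rewrite {1}HS !mulmxA mulmxV // mul1mx.
    by rewrite mul_diag_mx; apply/rowP => j; rewrite !mxE.
  apply/negP => /eqP Hr.
  have := congr1 (fun M => row i M) PP; rewrite row_mul Hr mul0mx => /rowP /(_ i).
  by rewrite !mxE eqxx /= => /eqP; rewrite eq_sym oner_eq0.
pose x' := map_mx toC x.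
have xt : x'^t* = map_mx toC x^T.
  by apply/matrixP => i j; rewrite !mxE conjC_toC.
pose y := x' *m P^t*.
have yt : y^t* = P *m x'^t*.
  by rewrite /y trmx_mul map_mxM trmxCK.
have E1 : x' *m S' *m x'^t* = y *m diag_mx d *m y^t*.
  by rewrite yt HS PiP /y !mulmxA.
have E2 : x' *m x'^t* = y *m y^t*.
  by rewrite yt /y !mulmxA -(mulmxA x') PtP mulmx1.
have key : toC c * (x' *m x'^t*) 0 0 <= (x' *m S' *m x'^t*) 0 0.
  rewrite E1 E2; clearbody y; exact: diag_lb.
move: key; rewrite xt /x' /S' -!map_mxM !mxE -rmorphM lecR.
by [].
Qed.
End Quad.

Section Aux2.
Variable R : rcfType.

Lemma tr_entries m k (U V : 'M[R]_(m, k)) :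
  \tr (U *m V^T) = \sum_i \sum_j U i j * V i j.
Proof. by apply: eq_bigr => i _; rewrite !mxE; apply: eq_bigr => j _; rewrite mxE. Qed.

Lemma frob2_tr m k (U : 'M[R]_(m, k)) : frob2 U = \tr (U *m U^T).
Proof. by rewrite tr_entries; apply: eq_bigr => i _; apply: eq_bigr => j _; rewrite expr2. Qed.

Lemma trC m k (U V : 'M[R]_(m, k)) : \tr (U *m V^T) = \tr (V *m U^T).
Proof. by rewrite -mxtrace_tr trmx_mul trmxK. Qed.

Lemma frob2D m k (U V : 'M[R]_(m, k)) :
  frob2 (U + V) = frob2 U + 2 * \tr (U *m V^T) + frob2 V.
Proof.
rewrite !frob2_tr linearD /= mulmxDl !mulmxDr !mxtraceD (trC V U).
by rewrite mulr2n mulrDl mul1r; ring.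
Qed.

Lemma tr_ge0 m k (U : 'M[R]_(m, k)) : 0 <= \tr (U *m U^T).
Proof.
rewrite tr_entries; apply: sumr_ge0 => i _; apply: sumr_ge0 => j _.
by rewrite -expr2 sqr_ge0.
Qed.

Lemma rowrow m k l (W : 'M[R]_(m, k)) (Z : 'M[R]_(l, k)) i j :
  (row i W *m (row j Z)^T) 0 0 = (W *m Z^T) i j.
Proof. by rewrite !mxE; apply: eq_bigr => t _; rewrite !mxE. Qed.

Lemma quad_tr k (S : 'M[R]_k) (c : R) :
  S^T = S -> (forall a, eigenvalue S a -> c <= a) ->
  forall m (Z : 'M[R]_(m, k)), c * \tr (Z *m Z^T) <= \tr (Z *m S *m Z^T).
Proof.
move=> Ssym Sev m Z; rewrite /mxtrace mulr_sumr; apply: ler_sum => i _.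
have := quad_lb Ssym Sev (row i Z).
by rewrite -[row i Z *m S]row_mul !rowrow.
Qed.


Lemma rv_sq k (v : 'rV[R]_k) : (v *m v^T) 0 0 = \sum_j v 0 j ^+ 2.
Proof. by rewrite !mxE; apply: eq_bigr => j _; rewrite !mxE expr2. Qed.

Lemma rv_pos k (v : 'rV[R]_k) : v != 0 -> 0 < (v *m v^T) 0 0.
Proof.
move=> vnz; rewrite rv_sq lt_def sumr_ge0 ?andbT; last by move=> j _; exact: sqr_ge0.
apply/negP => /eqP H; apply/negP: vnz; rewrite negbK; apply/eqP/rowP => j.
have := psumr_eq0P (fun j _ => sqr_ge0 (v 0 j)) H; move=> /(_ j isT).
by move/eqP; rewrite sqrf_eq0 mxE => /eqP.
Qed.

Lemma eig_bound m k (A0 : 'M[R]_(m, k)) (ni s : R) : 0 <= ni ->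
  is_sigma_min (ni *: (A0^T *m A0)) s ->
  forall a, eigenvalue (ni *: (A0^T *m A0)) a -> s <= a.
Proof.
move=> ni0 [s0 _ Hmin] a /eigenvalueP [v Hv vnz].
move: Hv Hmin; set M := ni *: (A0^T *m A0) => Hv Hmin.
have Msym : M^T = M by rewrite /M linearZ /= trmx_mul trmxK.
have ev2 : eigenvalue (M^T *m M) (a ^+ 2).
  apply/eigenvalueP; exists v => //.
  by rewrite Msym mulmxA Hv -scalemxAl Hv scalerA expr2.
have h2 := Hmin _ ev2.
have vv := rv_pos vnz.
have psd : 0 <= (v *m M *m v^T) 0 0.
  rewrite /M -scalemxAr -scalemxAl mxE.
  have -> : v *m (A0^T *m A0) *m v^T = (v *m A0^T) *m (v *m A0^T)^T by rewrite trmx_mul trmxK !mulmxA.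
  by apply: mulr_ge0 => //; rewrite rv_sq; apply: sumr_ge0 => j _; exact: sqr_ge0.
have : (v *m M *m v^T) 0 0 = a * (v *m v^T) 0 0 by rewrite Hv -scalemxAl mxE.
move=> E; rewrite E pmulr_lge0 // in psd.
nra.
Qed.


Lemma bigmax_ge_seq (I : eqType) (r : seq I) (F : I -> R) i :
  i \in r -> F i <= \big[Num.max/0]_(j <- r) F j.
Proof.
elim: r => [//|x r IH]; rewrite in_cons big_cons le_max.
by case/orP => [/eqP->|/IH->]; rewrite ?lexx ?orbT.
Qed.

Lemma bigmax_ge (I : finType) (F : I -> R) i : F i <= \big[Num.max/0]_j F j.
Proof. exact: bigmax_ge_seq (mem_index_enum i). Qed.

Lemma bigmax_ge0 (I : finType) (F : I -> R) : 0 <= \big[Num.max/0]_j F j.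
Proof. by elim: (index_enum I) => [|x r IH]; rewrite ?big_nil // big_cons le_max IH orbT. Qed.

Lemma maxnorm_ge m k (Z : 'M[R]_(m, k)) i j : `|Z i j| <= maxnorm Z.
Proof.
apply: le_trans (bigmax_ge (fun i => \big[Num.max/0]_(j < k) `|Z i j|) i).
exact: bigmax_ge.
Qed.

Lemma maxnorm_ge0 m k (Z : 'M[R]_(m, k)) : 0 <= maxnorm Z.
Proof. exact: bigmax_ge0. Qed.

Lemma sum_sq_diff (I : finType) (f : I -> R) :
  \sum_s \sum_t (f s - f t) ^+ 2 =
  2 * (#|I|%:R * \sum_i f i ^+ 2 - (\sum_i f i) ^+ 2).
Proof.
have E : forall s, \sum_t (f s - f t) ^+ 2 =
   #|I|%:R * f s ^+ 2 - 2 * f s * (\sum_t f t) + \sum_t f t ^+ 2.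
  move=> s; under eq_bigr do rewrite sqrrB.
  rewrite big_split sumrB /= sumr_const; congr (_ - _ + _).
    by rewrite mulr_natl.
  by rewrite mulr_sumr; apply: eq_bigr => t _; rewrite -mulr_natr; ring.
under eq_bigr do rewrite E.
rewrite big_split sumrB /= sumr_const -mulr_sumr -mulr_suml -mulr_natl.
rewrite -mulr_sumr -mulr_natl expr2; ring.
Qed.

Lemma cs_sum (I : finType) (f : I -> R) :
  (\sum_i f i) ^+ 2 <= #|I|%:R * \sum_i f i ^+ 2.
Proof.
have : 0 <= \sum_s \sum_t (f s - f t) ^+ 2.
  by apply: sumr_ge0 => s _; apply: sumr_ge0 => t _; exact: sqr_ge0.
by rewrite sum_sq_diff pmulr_rge0 // subr_ge0.
Qed.

Lemma l1_frob a b (D : 'M[R]_(a, b)) :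
  l1norm D <= Num.sqrt ((a * b)%:R) * frob D.
Proof.
have l0 : 0 <= l1norm D.
  by apply: sumr_ge0 => i _; apply: sumr_ge0 => j _.
have h : l1norm D ^+ 2 <= (a * b)%:R * frob2 D.
  rewrite /l1norm /frob2 !pair_bigA /=.
  have := cs_sum (fun p : 'I_a * 'I_b => `|D p.1 p.2|).
  rewrite card_prod !card_ord natrM.
  have E : \sum_p `|D p.1 p.2| ^+ 2 = \sum_(p : 'I_a * 'I_b) D p.1 p.2 ^+ 2.
    by apply: eq_bigr => p _; rewrite real_normK // num_real.
  by rewrite E.
rewrite /frob -sqrtrM ?ler0n // -(ger0_norm l0) -sqrtr_sqr.
by rewrite ler_sqrt // mulr_ge0 ?ler0n // sumr_ge0 // => i _; rewrite sumr_ge0 // => j _; rewrite sqr_ge0.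
Qed.

End Aux2.

Unset Implicit Arguments.

Lemma entryB (R : rcfType) m k (Z W : 'M[R]_(m, k)) u v :
  (Z - W) u v = Z u v - W u v.
Proof. by rewrite !mxE. Qed.

Lemma trZ (R : rcfType) m k (a : R) (Z : 'M[R]_(m, k)) : (a *: Z)^T = a *: Z^T.
Proof. by apply/matrixP => i j; rewrite !mxE. Qed.

Theorem mainTheorem7 (R : rcfType) (n p q : nat)
  (X : 'M[R]_(n, p)) (Y : 'M[R]_(n, q))
  (Su : {set 'I_p}) (Sv : {set 'I_q})
  (Bstar : 'M[R]_(p, q)) (lambda sigX sigY : R)
  (Btilde : 'M[R]_(#|Su|, #|Sv|)) :
  let SigX := n%:R^-1 *: (X^T *m X) in
  let SigY := n%:R^-1 *: (Y^T *m Y) in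
  let SigXY := n%:R^-1 *: (X^T *m Y) in
  let obj (B : 'M[R]_(#|Su|, #|Sv|)) :=
    2^-1 * frob2 (n%:R^-1 *: (subcols Su X *m B *m (subcols Sv Y)^T) - 1%:M)
    + lambda * l1norm B in
  (forall i j, Bstar i j != 0 -> (i \in Su) && (j \in Sv)) ->
  (#|Su| * #|Sv| < n)%N ->
  0 < lambda ->
  is_sigma_min (submat Su Su SigX) sigX -> 0 < sigX ->
  is_sigma_min (submat Sv Sv SigY) sigY -> 0 < sigY ->
  (forall B, obj Btilde <= obj B) ->
  frob (Btilde - submat Su Sv Bstar)
    <= 2 * (maxnorm (SigXY - SigX *m Bstar *m SigY) + lambda) / (sigX * sigY)
       * Num.sqrt ((#|Su| * #|Sv|)%:R).
Proof.
move=> SigX SigY SigXY obj Hsupp _ hl Hsx sX0 Hsy sY0 Hopt.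
set ni : R := n%:R^-1.
have ni0 : 0 <= ni by rewrite invr_ge0 ler0n.
set Eu := sel (R:=R) Su; set Ev := sel (R:=R) Sv.
set A := X *m Eu^T; set Cm := Y *m Ev^T.
have HM : submat Su Su SigX = ni *: (A^T *m A).
  by rewrite submatE /A trmx_mul trmxK -scalemxAr -scalemxAl !mulmxA.
have HN : submat Sv Sv SigY = ni *: (Cm^T *m Cm).
  by rewrite submatE /Cm trmx_mul trmxK -scalemxAr -scalemxAl !mulmxA.
have HXY : submat Su Sv SigXY = ni *: (A^T *m Cm).
  by rewrite submatE /A /Cm trmx_mul trmxK -scalemxAr -scalemxAl !mulmxA.
set B0 := submat Su Sv Bstar.
set G := submat Su Sv (SigX *m Bstar *m SigY - SigXY).
have HG : G = submat Su Su SigX *m B0 *m submat Sv Sv SigY - submat Su Sv SigXY.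
  rewrite /G /B0 !submatE mulmxBr mulmxBl.
  by rewrite -{1}(support_eq Hsupp) /Eu /Ev !submatE !mulmxA.
rewrite HM HN HXY in HG.
rewrite HM in Hsx; rewrite HN in Hsy.
have evX := eig_bound ni0 Hsx; have evY := eig_bound ni0 Hsy.
case: Hsx => sX0' _ _.
set M := ni *: (A^T *m A) in HG evX.
set N := ni *: (Cm^T *m Cm) in HG evY.
have Msym : M^T = M by rewrite /M linearZ /= trmx_mul trmxK.
have Nsym : N^T = N by rewrite /N linearZ /= trmx_mul trmxK.
set Dl := Btilde - B0.
set U := ni *: (A *m B0 *m Cm^T) - 1%:M.
set D := ni *: (A *m Dl *m Cm^T).
have HUD : ni *: (A *m Btilde *m Cm^T) - 1%:M = U + D.
  rewrite /U /D /Dl addrAC -scalerDr -!mulmxDl -mulmxDr.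
  by rewrite [B0 + _]addrC subrK.
have eDl : Dl = Btilde - B0 by [].
clearbody Dl.
have Hob := Hopt B0.
rewrite /obj !subcolsE -/Eu -/Ev -/A -/Cm HUD frob2D in Hob.
clearbody A Cm.
have Htr : \tr (U *m D^T) = \tr (G *m Dl^T).
  rewrite HG /U /D !mulmxBl mul1mx !linearB /=.
  congr (_ - _).
    rewrite /M /N trZ -!scalemxAl -!scalemxAr -!scalemxAl !scalerA !mxtraceZ.
    congr (_ * _); rewrite !trmx_mul !trmxK !mulmxA.
    by rewrite [LHS]mxtrace_mulC !mulmxA.
  rewrite trZ -!scalemxAl !mxtraceZ; congr (_ * _).
  rewrite [LHS]mxtrace_tr -mulmxA [LHS]mxtrace_mulC -[RHS]mxtrace_tr.
  by rewrite !trmx_mul !trmxK !mulmxA.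
set g := maxnorm (SigXY - SigX *m Bstar *m SigY).
have g0 : 0 <= g by exact: maxnorm_ge0.
have Hg : - \tr (G *m Dl^T) <= g * l1norm Dl.
  have H : `|\tr (G *m Dl^T)| <= g * l1norm Dl.
    rewrite tr_entries.
    apply: le_trans (ler_norm_sum _ _ _) _; rewrite /l1norm mulr_sumr; apply: ler_sum => i _.
    apply: le_trans (ler_norm_sum _ _ _) _; rewrite mulr_sumr; apply: ler_sum => j _.
    rewrite normrM; apply: ler_wpM2r => //.
    by rewrite /G mxE entryB distrC -entryB maxnorm_ge.
  by apply: le_trans H; rewrite -normrN ler_norm.
have Hl1 : l1norm B0 - l1norm Btilde <= l1norm Dl.
  rewrite /l1norm -sumrB; apply: ler_sum => i _.
  rewrite -sumrB; apply: ler_sum => j _.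
  by rewrite eDl entryB distrC lerB_dist.
have Hsc : sigX * sigY * frob2 Dl <= frob2 D.
  have e1 : frob2 D = ni * \tr ((Cm *m Dl^T) *m M *m (Cm *m Dl^T)^T).
    rewrite frob2_tr /D /M trZ -!scalemxAl -!scalemxAr -?scalemxAl !scalerA !mxtraceZ mulrA.
    congr (_ * _).
    by rewrite [LHS]mxtrace_mulC !trmx_mul !trmxK !mulmxA.
  have e2 : ni * \tr ((Cm *m Dl^T) *m (Cm *m Dl^T)^T) = \tr (Dl *m N *m Dl^T).
    rewrite /N -scalemxAr -scalemxAl mxtraceZ; congr (_ * _).
    by rewrite mxtrace_mulC !trmx_mul !trmxK !mulmxA.
  rewrite e1.
  apply: le_trans (ler_wpM2l ni0 (quad_tr Msym evX (Cm *m Dl^T))).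
  rewrite mulrCA e2.
  apply: le_trans (ler_wpM2l (ltW sX0) (quad_tr Nsym evY Dl)).
  by rewrite frob2_tr mulrA.
have Hl1' : lambda * (l1norm B0 - l1norm Btilde) <= lambda * l1norm Dl.
  by apply: ler_wpM2l => //; exact: ltW.
change (frob2 (n%:R^-1 *: (A *m B0 *m Cm^T) - 1%:M)) with (frob2 U) in Hob.
rewrite Htr in Hob.
have Hk : sigX * sigY * frob2 Dl <= 2 * (g + lambda) * l1norm Dl.
  lra.
have hf := l1_frob Dl.
have f0 : 0 <= frob Dl by exact: sqrtr_ge0.
have f2 : frob2 Dl = frob Dl ^+ 2.
  by rewrite /frob sqr_sqrtr // frob2_tr tr_ge0.
have s0 : 0 <= Num.sqrt ((#|Su| * #|Sv|)%:R : R) by exact: sqrtr_ge0.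
have gl0 : 0 <= 2 * (g + lambda) by apply: mulr_ge0 => //; apply: addr_ge0 => //; exact: ltW.
have Hk2 := le_trans Hk (ler_wpM2l gl0 hf).
rewrite f2 in Hk2.
have K0 : 0 < sigX * sigY by exact: mulr_gt0.
rewrite mulrAC ler_pdivlMr //.
move: Hk2 f0 s0 gl0 K0.
set f := frob Dl; set sq := Num.sqrt _; set K := sigX * sigY.
move=> Hk2 f0 s0 gl0 K0.
have [->|fn0] := eqVneq f 0; first by rewrite mul0r mulr_ge0.
have fp : 0 < f by rewrite lt_def fn0 f0.
nra.
Qed.
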